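(* The constant allocation $s\equiv\tfrac12$ maximizes $W_0(s)=\int_0^{\bar\theta}\frac{1-F(\theta)}{f(\theta)}s(\theta)\,dF(\theta)$ over $\mathcal S(0)$ if and only if $$\int_0^\theta\Big(\frac{1-F(x)}{f(x)}-\mathbb E[\theta]\Big)dF(x)\ \ge\ 0\qquad\text{for all }\theta\in[0,\bar\theta],$$ where $\mathbb E[\theta]=\int_0^{\bar\theta}x\,dF(x)$.
   Context: Let $0<\bar\theta<\infty$, $\Theta=[0,\bar\theta]$, $F$ a cdf on $\Theta$ with continuous, strictly positive density $f$, $dF=f\,d\theta$. For bounded measurable $a,b$ on $\Theta$, write $b\in\mathrm{MPS}(a)$ if $\int_x^{\bar\theta}b\,dF\le\int_x^{\bar\theta}a\,dF$ for all $x\in\Theta$, with equality at $x=0$. $\mathcal S(0)$ is the set of nondecreasing $s:\Theta\to[0,1]$ with $s\in\mathrm{MPS}(F)$ (feasible interim statuses when exclusion is impossible). $s\equiv\frac12$ corresponds to offering a single (free) level. *)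

(* Defs.v *)
From Stdlib Require Import Reals.
From Coquelicot Require Import Coquelicot.
Open Scope R_scope.

Definition continuous_on_Icc (f : R -> R) (a b : R) : Prop :=
  forall x, a <= x <= b -> forall eps, 0 < eps ->
    exists delta, 0 < delta /\
      forall y, a <= y <= b -> Rabs (y - x) < delta -> Rabs (f y - f x) < eps.

Definition cdf_with_density (tb : R) (F f : R -> R) : Prop :=
  continuous_on_Icc f 0 tb /\
  (forall x, 0 <= x <= tb -> 0 < f x) /\
  (forall x, 0 <= x <= tb -> F x = RInt f 0 x) /\
  F tb = 1.

Definition MPS (tb : R) (f : R -> R) (b a : R -> R) : Prop :=
  (forall x, 0 <= x <= tb ->
     RInt (fun t => b t * f t) x tb <= RInt (fun t => a t * f t) x tb) /\
  RInt (fun t => b t * f t) 0 tb = RInt (fun t => a t * f t) 0 tb.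

Definition S0 (tb : R) (F f : R -> R) (s : R -> R) : Prop :=
  (forall x y, 0 <= x -> x <= y -> y <= tb -> s x <= s y) /\
  (forall x, 0 <= x <= tb -> 0 <= s x <= 1) /\
  MPS tb f s F.

Definition W0 (tb : R) (F f : R -> R) (s : R -> R) : R :=
  RInt (fun t => (1 - F t) / f t * s t * f t) 0 tb.

Definition maximizes_W0 (tb : R) (F f : R -> R) (s : R -> R) : Prop :=
  S0 tb F f s /\ forall s', S0 tb F f s' -> W0 tb F f s' <= W0 tb F f s.

Definition mean_theta (tb : R) (f : R -> R) : R :=
  RInt (fun x => x * f x) 0 tb.

(* Main.v *)
Require Import Defs.
From Stdlib Require Import Reals Lra Psatz.
From Coquelicot Require Import Coquelicot.
From Stdlib Require Import ClassicalEpsilon.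
Open Scope R_scope.

Lemma RInt_plusR (f g : R -> R) a b : ex_RInt f a b -> ex_RInt g a b ->
  RInt (fun x => f x + g x) a b = RInt f a b + RInt g a b.
Proof. intros H H0. exact (RInt_plus f g a b H H0). Qed.
Lemma RInt_minusR (f g : R -> R) a b : ex_RInt f a b -> ex_RInt g a b ->
  RInt (fun x => f x - g x) a b = RInt f a b - RInt g a b.
Proof. intros H H0. exact (RInt_minus f g a b H H0). Qed.
Lemma RInt_scalR (f : R -> R) a b k : ex_RInt f a b -> RInt (fun x => k * f x) a b = k * RInt f a b.
Proof. intros H. exact (RInt_scal f a b k H). Qed.
Lemma ex_RInt_plusR (f g : R -> R) a b : ex_RInt f a b -> ex_RInt g a b ->
  ex_RInt (fun x => f x + g x) a b.
Proof. intros H H0. exact (ex_RInt_plus f g a b H H0). Qed.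
Lemma ex_RInt_minusR (f g : R -> R) a b : ex_RInt f a b -> ex_RInt g a b ->
  ex_RInt (fun x => f x - g x) a b.
Proof. intros H H0. exact (ex_RInt_minus f g a b H H0). Qed.
Lemma ex_RInt_scalR (f : R -> R) a b k : ex_RInt f a b -> ex_RInt (fun x => k * f x) a b.
Proof. intros H. exact (ex_RInt_scal f a b k H). Qed.
Lemma RInt_ChaslesR (f : R -> R) a b c : ex_RInt f a b -> ex_RInt f b c ->
  RInt f a b + RInt f b c = RInt f a c.
Proof. intros H H0. exact (RInt_Chasles f a b c H H0). Qed.
Lemma RInt_pointR (f : R -> R) a : RInt f a a = 0.
Proof. exact (RInt_point a f). Qed.

Ltac toR := try match goal with |- ?x = ?y => change (@eq R x y) end.

Definition Cont_on (g : R -> R) a b := forall z, a <= z <= b -> continuous g z.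
Definition Mono_on (s : R -> R) a b := forall x y, a <= x -> x <= y -> y <= b -> s x <= s y.

Lemma cont_ex (g : R -> R) a b : a <= b -> Cont_on g a b -> ex_RInt g a b.
Proof.
  intros Hab Hg. apply (ex_RInt_continuous (V:=R_CompleteNormedModule)). intros z Hz.
  rewrite Rmin_left in Hz by lra. rewrite Rmax_right in Hz by lra. apply Hg; lra.
Qed.

Lemma threshold (s : R -> R) a b c : a <= b -> Mono_on s a b ->
  exists m, a <= m <= b /\ (forall t, a < t < m -> s t < c) /\ (forall t, m < t < b -> c <= s t).
Proof.
  intros Hab Hs.
  set (E := fun t => (a <= t <= b /\ s t < c) \/ t = a).
  assert (HB : bound E). { exists b. intros t [[Ht _]|Ht]; lra. }
  assert (HE : exists x, E x). { exists a. right. reflexivity. }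
  destruct (completeness E HB HE) as [m [Hub Hlub]].
  exists m. assert (a <= m) by (apply Hub; right; reflexivity).
  assert (m <= b) by (apply Hlub; intros t [[Ht _]|Ht]; lra).
  split; [lra|split].
  - intros t Ht.
    destruct (Rlt_dec t m) as [_|]; [|lra].
    assert (exists e, E e /\ t < e) as [e [[[He1 He2]|He] Hte]].
    { apply Classical_Prop.NNPP. intros Hn. assert (m <= t).
      { apply Hlub. intros e Ee. apply Rnot_lt_le. intros Hl. apply Hn. exists e; auto. }
      lra. }
    + apply Rle_lt_trans with (s e); auto. apply Hs; lra.
    + lra.
  - intros t Ht. apply Rnot_lt_le. intros Hl.
    assert (E t) by (left; split; [lra|auto]). assert (t <= m) by (apply Hub; auto). lra.
Qed.

Definition Ind (s : R -> R) c t := if Rle_dec c (s t) then 1 else 0.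

Lemma Ind_int (s : R -> R) a b c : a <= b -> Mono_on s a b ->
  exists m, a <= m <= b /\ forall g, Cont_on g a b ->
   ex_RInt (fun t => Ind s c t * g t) a b /\ RInt (fun t => Ind s c t * g t) a b = RInt g m b.
Proof.
  intros Hab Hs. destruct (threshold s a b c Hab Hs) as [m [Hm [H1 H2]]].
  exists m. split; auto. intros g Hg.
  assert (E1 : ex_RInt (fun t => Ind s c t * g t) a m).
  { apply (ex_RInt_ext (V:=R_NormedModule)) with (fun _ => 0). 2: apply ex_RInt_const.
    intros x Hx. rewrite Rmin_left in Hx by lra. rewrite Rmax_right in Hx by lra.
    unfold Ind. toR. destruct Rle_dec; [|ring]. specialize (H1 x Hx). lra. }
  assert (E2g : ex_RInt g m b) by (apply cont_ex; [lra| intros z Hz; apply Hg; lra]).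
  assert (E2 : ex_RInt (fun t => Ind s c t * g t) m b).
  { apply (ex_RInt_ext (V:=R_NormedModule)) with g. 2: auto.
    intros x Hx. rewrite Rmin_left in Hx by lra. rewrite Rmax_right in Hx by lra.
    unfold Ind. toR. destruct Rle_dec; [ring|]. specialize (H2 x Hx). lra. }
  split. { eapply ex_RInt_Chasles; eauto. }
  rewrite <- (RInt_ChaslesR _ a m b E1 E2).
  rewrite (RInt_ext _ (fun _ => 0) a m).
  2:{ intros x Hx. rewrite Rmin_left in Hx by lra. rewrite Rmax_right in Hx by lra.
    unfold Ind. toR. destruct Rle_dec; [|ring]. specialize (H1 x Hx). lra. }
  rewrite (RInt_ext _ g m b).
  2:{ intros x Hx. rewrite Rmin_left in Hx by lra. rewrite Rmax_right in Hx by lra.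
    unfold Ind. toR. destruct Rle_dec; [ring|]. specialize (H2 x Hx). lra. }
  rewrite RInt_const. unfold scal; simpl; unfold mult; simpl. ring.
Qed.

Lemma approx (a b L d : R) : a <= b -> 0 < d -> forall (n : nat) (s : R -> R), Mono_on s a b ->
 (forall t, a <= t <= b -> L <= s t < L + INR (S n) * d) ->
 exists h : R -> R, (forall t, a <= t <= b -> L <= h t <= s t /\ s t < h t + d) /\
   (forall g, Cont_on g a b -> ex_RInt (fun t => h t * g t) a b) /\
   (forall g, Cont_on g a b -> RInt g a b = 0 -> (forall m, a <= m <= b -> RInt g m b <= 0) ->
      RInt (fun t => h t * g t) a b <= 0).
Proof.
  intros Hab Hd n. induction n as [|n IH]; intros s Hs Hv.
  - exists (fun _ => L). split; [|split].
    + intros t Ht. specialize (Hv t Ht). change (INR 1) with 1 in Hv. lra.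
    + intros g Hg. apply ex_RInt_scalR. apply cont_ex; auto.
    + intros g Hg H0 _. rewrite RInt_scalR by (apply cont_ex; auto). rewrite H0. lra.
  - set (s' := fun t => Rmax (s t - d) L).
    assert (HSn : 0 < INR (S n)) by (apply lt_0_INR; lia).
    destruct (IH s') as [h' [Hh1 [Hh2 Hh3]]].
    { intros x y Hx Hxy Hy. unfold s'. pose proof (Hs x y Hx Hxy Hy).
      unfold Rmax. destruct Rle_dec; destruct Rle_dec; lra. }
    { intros t Ht. specialize (Hv t Ht). rewrite S_INR in Hv. unfold s'.
      assert (0 < INR (S n) * d) by (apply Rmult_lt_0_compat; lra).
      unfold Rmax. destruct Rle_dec; lra. }
    destruct (Ind_int s a b (L + d) Hab Hs) as [m [Hm HI]].
    exists (fun t => h' t + d * Ind s (L + d) t). split; [|split].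
    + intros t Ht. specialize (Hh1 t Ht). specialize (Hv t Ht). unfold s' in Hh1.
      unfold Ind. destruct (Rle_dec (L + d) (s t)).
      * rewrite Rmax_left in Hh1 by lra. lra.
      * rewrite Rmax_right in Hh1 by lra. lra.
    + intros g Hg. apply (ex_RInt_ext (V:=R_NormedModule)) with
        (fun t => h' t * g t + d * (Ind s (L + d) t * g t)).
      { intros x _. toR. ring. }
      apply ex_RInt_plusR; [apply Hh2; auto|]. apply ex_RInt_scalR. apply (HI g Hg).
    + intros g Hg H0 Hm0.
      rewrite (RInt_ext _ (fun t => h' t * g t + d * (Ind s (L + d) t * g t))).
      2:{ intros x _. toR. ring. }
      destruct (HI g Hg) as [HI1 HI2].
      rewrite RInt_plusR; [| apply Hh2; auto | apply ex_RInt_scalR; auto].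
      rewrite RInt_scalR by auto. rewrite HI2.
      specialize (Hh3 g Hg H0 Hm0). specialize (Hm0 m Hm).
      assert (d * RInt g m b <= 0) by nra. lra.
Qed.

Lemma approx' (a b d : R) (s : R -> R) : a <= b -> 0 < d -> Mono_on s a b ->
 exists h : R -> R, (forall t, a <= t <= b -> h t <= s t /\ s t < h t + d) /\
   (forall g, Cont_on g a b -> ex_RInt (fun t => h t * g t) a b) /\
   (forall g, Cont_on g a b -> RInt g a b = 0 -> (forall m, a <= m <= b -> RInt g m b <= 0) ->
      RInt (fun t => h t * g t) a b <= 0).
Proof.
  intros Hab Hd Hs.
  destruct (INR_archimed d (s b - s a) Hd) as [n Hn].
  destruct (approx a b (s a) d Hab Hd n s Hs) as [h [H1 [H2 H3]]].
  { intros t Ht. pose proof (Hs a t (Rle_refl a) (proj1 Ht) (proj2 Ht)).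
    pose proof (Hs t b (proj1 Ht) (proj2 Ht) (Rle_refl b)). rewrite S_INR. lra. }
  exists h. split; [|split]; auto. intros t Ht. specialize (H1 t Ht). lra.
Qed.

Lemma mono_int (a b : R) (s g : R -> R) : a <= b -> Mono_on s a b -> Cont_on g a b ->
  ex_RInt (fun t => s t * g t) a b.
Proof.
  intros Hab Hs Hg.
  destruct (ex_RInt_ub g a b (cont_ex g a b Hab Hg)) as [M HM].
  assert (Hch : forall k : nat, exists h : R -> R,
    (forall t, a <= t <= b -> h t <= s t /\ s t < h t + / (INR k + 1)) /\
    ex_RInt (fun t => h t * g t) a b).
  { intros k. assert (0 < / (INR k + 1)).
    { apply Rinv_0_lt_compat. pose proof (pos_INR k). lra. }
    destruct (approx' a b (/ (INR k + 1)) s Hab H Hs) as [h [H1 [H2 _]]].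
    exists h; split; auto. }
  set (hk := fun k => proj1_sig (constructive_indefinite_description _ (Hch k))).
  assert (Hk : forall k, (forall t, a <= t <= b -> hk k t <= s t /\ s t < hk k t + / (INR k + 1)) /\
    ex_RInt (fun t => hk k t * g t) a b).
  { intros k. unfold hk. destruct (constructive_indefinite_description _ (Hch k)) as [h Hh].
    exact Hh. }
  set (fk := fun k t => if Rle_dec a t then if Rle_dec t b then hk k t * g t else s t * g t
                        else s t * g t).
  destruct (filterlim_RInt (V:=R_CompleteNormedModule) fk a b eventually _
     (fun t => s t * g t) (fun k => RInt (fk k) a b)) as [If [_ HIf]].
  - intros k. apply (RInt_correct (V:=R_CompleteNormedModule)).
    apply (ex_RInt_ext (V:=R_NormedModule)) with (fun t => hk k t * g t); [|apply Hk].
    intros x Hx. rewrite Rmin_left in Hx by lra. rewrite Rmax_right in Hx by lra.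
    unfold fk. destruct Rle_dec; [|lra]. destruct Rle_dec; [|lra]. reflexivity.
  - intros P [eps HP].
    assert (Hpos : 0 < (Rabs M + 1) / eps).
    { apply Rdiv_lt_0_compat; [pose proof (Rabs_pos M); lra | apply cond_pos]. }
    destruct (INR_archimed 1 ((Rabs M + 1) / eps)) as [N HN]; [lra|].
    exists N. intros k Hk'. apply HP. intros t.
    change (Rabs (fk k t - s t * g t) < eps).
    unfold fk. destruct Rle_dec as [Ha|Ha]; [destruct Rle_dec as [Hb|Hb]|].
    2,3: rewrite Rminus_diag, Rabs_R0; apply cond_pos.
    destruct (Hk k) as [Hk1 _]. specialize (Hk1 t (conj Ha Hb)).
    assert (Hgt : Rabs (g t) <= Rabs M).
    { specialize (HM t). rewrite Rmin_left, Rmax_right in HM by lra.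
      specialize (HM (conj Ha Hb)). change (Rabs (g t) <= M) in HM.
      pose proof (Rle_abs M). lra. }
    replace (hk k t * g t - s t * g t) with ((hk k t - s t) * g t) by ring.
    rewrite Rabs_mult.
    assert (HkN : INR N <= INR k) by (apply le_INR; lia).
    assert (Hie : / (INR k + 1) * (Rabs M + 1) < eps).
    { pose proof (cond_pos eps). pose proof (pos_INR N).
      apply Rmult_lt_reg_l with (INR k + 1); [lra|].
      rewrite <- Rmult_assoc, Rinv_r by lra. rewrite Rmult_1_l.
      unfold Rdiv in HN. rewrite Rmult_1_r in HN.
      apply Rmult_lt_compat_r with (r := eps) in HN; [|lra].
      rewrite Rmult_assoc, Rinv_l in HN by lra. nra. }
    assert (Rabs (hk k t - s t) <= / (INR k + 1)).
    { rewrite Rabs_left1 by lra. lra. }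
    pose proof (Rabs_pos (g t)). pose proof (Rabs_pos (hk k t - s t)).
    apply Rle_lt_trans with (/ (INR k + 1) * (Rabs M + 1)); [|exact Hie].
    apply Rmult_le_compat; lra.
  - exists If. exact HIf.
Qed.

Lemma bonnet (a b : R) (s g : R -> R) : a <= b -> Mono_on s a b -> Cont_on g a b ->
  RInt g a b = 0 -> (forall m, a <= m <= b -> RInt g m b <= 0) ->
  RInt (fun t => s t * g t) a b <= 0.
Proof.
  intros Hab Hs Hg H0 Hm.
  destruct (ex_RInt_ub g a b (cont_ex g a b Hab Hg)) as [M HM].
  apply Rnot_lt_le. intros Hc.
  set (I := RInt (fun t => s t * g t) a b) in *.
  set (d := I / ((b - a) * (Rabs M + 1) + 1)).
  assert (Hden : 0 < (b - a) * (Rabs M + 1) + 1).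
  { pose proof (Rabs_pos M). assert (0 <= (b - a) * (Rabs M + 1)) by nra. lra. }
  assert (Hd : 0 < d) by (apply Rdiv_lt_0_compat; lra).
  destruct (approx' a b d s Hab Hd Hs) as [h [H1 [H2 H3]]].
  assert (Es : ex_RInt (fun t => s t * g t) a b) by (apply mono_int; auto).
  assert (Eh := H2 g Hg).
  assert (Hsplit : I = RInt (fun t => h t * g t) a b + RInt (fun t => s t * g t - h t * g t) a b).
  { rewrite RInt_minusR by auto. unfold I. lra. }
  assert (Hb : Rabs (RInt (fun t => s t * g t - h t * g t) a b) <= (b - a) * (d * (Rabs M + 1))).
  { apply abs_RInt_le_const; auto. apply ex_RInt_minusR; auto.
    intros t Ht. specialize (H1 t Ht).
    assert (Hgt : Rabs (g t) <= Rabs M).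
    { specialize (HM t). rewrite Rmin_left, Rmax_right in HM by lra.
      specialize (HM Ht). change (Rabs (g t) <= M) in HM.
      pose proof (Rle_abs M). lra. }
    replace (s t * g t - h t * g t) with ((s t - h t) * g t) by ring.
    rewrite Rabs_mult. rewrite Rabs_right by lra.
    pose proof (Rabs_pos (g t)). apply Rmult_le_compat; lra. }
  specialize (H3 g Hg H0 Hm).
  pose proof (Rle_abs (RInt (fun t => s t * g t - h t * g t) a b)).
  assert (Hk : (b - a) * (d * (Rabs M + 1)) < I).
  { unfold d. pose proof (Rabs_pos M).
    assert (HH : (b - a) * (I / ((b - a) * (Rabs M + 1) + 1) * (Rabs M + 1))
       = I * ((b - a) * (Rabs M + 1)) / ((b - a) * (Rabs M + 1) + 1)) by (field; lra).
    rewrite HH. apply Rmult_lt_reg_r with ((b - a) * (Rabs M + 1) + 1); [lra|].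
    unfold Rdiv. rewrite Rmult_assoc, Rinv_l by lra. nra. }
  lra.
Qed.

Lemma is_derive_multR (u v : R -> R) x du dv : is_derive u x du -> is_derive v x dv ->
  is_derive (fun t => u t * v t) x (du * v x + u x * dv).
Proof.
  intros H1 H2. exact (is_derive_mult (K:=R_AbsRing) u v x du dv H1 H2 Rmult_comm).
Qed.
Lemma contR_plus (u v : R -> R) x : continuous u x -> continuous v x -> continuous (fun t => u t + v t) x.
Proof. intros; exact (continuous_plus u v x H H0). Qed.
Lemma contR_minus (u v : R -> R) x : continuous u x -> continuous v x -> continuous (fun t => u t - v t) x.
Proof. intros; exact (continuous_minus u v x H H0). Qed.
Lemma contR_mult (u v : R -> R) x : continuous u x -> continuous v x -> continuous (fun t => u t * v t) x.
Proof. intros; exact (continuous_mult u v x H H0). Qed.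
Lemma contR_const (c : R) x : continuous (fun _ : R => c) x.
Proof. exact (continuous_const c x). Qed.
Lemma contR_id x : continuous (fun t : R => t) x.
Proof. exact (continuous_id x). Qed.

Lemma ftc (G g : R -> R) a b : (forall x, is_derive G x (g x)) -> (forall x, continuous g x) ->
  RInt g a b = G b - G a.
Proof.
  intros H1 H2. apply (is_RInt_unique (V:=R_CompleteNormedModule)).
  exact (is_RInt_derive (V:=R_CompleteNormedModule) G g a b (fun x _ => H1 x) (fun x _ => H2 x)).
Qed.

Lemma ex_all (g : R -> R) a b : (forall x, continuous g x) -> ex_RInt g a b.
Proof. intros H. apply (ex_RInt_continuous (V:=R_CompleteNormedModule)). intros; apply H. Qed.

Lemma cont_on_all (g : R -> R) a b : (forall x, continuous g x) -> Cont_on g a b.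
Proof. intros H z _; apply H. Qed.

Definition clampR (tb x : R) := Rmax 0 (Rmin tb x).
Definition feR (tb : R) (f : R -> R) x := f (clampR tb x).
Definition FeR (tb : R) (f : R -> R) x := RInt (feR tb f) 0 x.

Lemma clamp_in tb x : 0 <= tb -> 0 <= clampR tb x <= tb.
Proof. intros. unfold clampR, Rmax, Rmin. repeat destruct Rle_dec; lra. Qed.
Lemma clamp_id tb x : 0 <= x <= tb -> clampR tb x = x.
Proof. intros. unfold clampR, Rmax, Rmin. repeat destruct Rle_dec; lra. Qed.
Lemma clamp_lip tb x y : 0 <= tb -> Rabs (clampR tb y - clampR tb x) <= Rabs (y - x).
Proof.
  intros. unfold clampR, Rmax, Rmin. repeat destruct Rle_dec; unfold Rabs;
  repeat destruct Rcase_abs; lra.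
Qed.

Lemma fe_cont tb f : 0 <= tb -> continuous_on_Icc f 0 tb -> forall x, continuous (feR tb f) x.
Proof.
  intros Htb Hc x. apply continuity_pt_filterlim.
  intros eps Heps.
  destruct (Hc (clampR tb x) (clamp_in tb x Htb) eps Heps) as [d [Hd Hd2]].
  exists d. split; auto. intros y [_ Hy]. simpl in *. unfold R_dist in *.
  unfold feR. apply Hd2. apply clamp_in; auto.
  eapply Rle_lt_trans; [apply clamp_lip; auto|exact Hy].
Qed.

Lemma Fe_deriv tb f : 0 <= tb -> continuous_on_Icc f 0 tb ->
  forall x, is_derive (FeR tb f) x (feR tb f x).
Proof.
  intros Htb Hc x. apply (is_derive_RInt (V:=R_NormedModule) (feR tb f) (FeR tb f) 0 x).
  - apply filter_forall. intros b0. unfold FeR.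
    apply (RInt_correct (V:=R_CompleteNormedModule)). apply ex_all. apply fe_cont; auto.
  - apply fe_cont; auto.
Qed.

Lemma Fe_cont tb f : 0 <= tb -> continuous_on_Icc f 0 tb -> forall x, continuous (FeR tb f) x.
Proof.
  intros Htb Hc x. apply (ex_derive_continuous (K:=R_AbsRing) (V:=R_NormedModule) (FeR tb f)). eexists. apply Fe_deriv; auto.
Qed.

Lemma RInt_ext_in tb (u v : R -> R) a b : 0 <= a <= tb -> 0 <= b <= tb ->
  (forall t, 0 <= t <= tb -> u t = v t) -> RInt u a b = RInt v a b.
Proof.
  intros Ha Hb H. apply RInt_ext. intros x Hx. apply H.
  unfold Rmin, Rmax in Hx. destruct Rle_dec; lra.
Qed.
Lemma ex_RInt_ext_in tb (u v : R -> R) a b : 0 <= a <= tb -> 0 <= b <= tb ->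
  (forall t, 0 <= t <= tb -> u t = v t) -> ex_RInt u a b -> ex_RInt v a b.
Proof.
  intros Ha Hb H. apply (ex_RInt_ext (V:=R_NormedModule)). intros x Hx. apply H.
  unfold Rmin, Rmax in Hx. destruct Rle_dec; lra.
Qed.

Theorem mainTheorem15 (tb : R) (F f : R -> R)
  (Htb : 0 < tb) (HF : cdf_with_density tb F f) :
  maximizes_W0 tb F f (fun _ => 1 / 2) <->
  (forall theta, 0 <= theta <= tb ->
     0 <= RInt (fun x => ((1 - F x) / f x - mean_theta tb f) * f x) 0 theta).
Proof.
  pose proof HF as [Hc [Hpos [HFint HF1]]].
  assert (Htb0 : 0 <= tb) by lra.
  set (fe := feR tb f). set (Fe := FeR tb f).
  assert (Hfe_c : forall x, continuous fe x) by (apply fe_cont; auto).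
  assert (HFe_d : forall x, is_derive Fe x (fe x)) by (apply Fe_deriv; auto).
  assert (HFe_c : forall x, continuous Fe x) by (apply Fe_cont; auto).
  assert (Hfe_eq : forall x, 0 <= x <= tb -> fe x = f x).
  { intros x Hx. unfold fe, feR. rewrite clamp_id; auto. }
  assert (Hfe_pos : forall x, 0 < fe x).
  { intros x. unfold fe, feR. apply Hpos. apply clamp_in; lra. }
  assert (HFF : forall x, 0 <= x <= tb -> F x = Fe x).
  { intros x Hx. rewrite HFint by auto. unfold Fe, FeR.
    apply RInt_ext_in with tb; [lra|auto|]. intros t Ht. symmetry. apply Hfe_eq; auto. }
  assert (HFint2 : forall a b, RInt fe a b = Fe b - Fe a) by (intros; apply ftc; auto).
  assert (HFe0 : Fe 0 = 0) by (unfold Fe, FeR; apply RInt_pointR).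
  assert (HFe1 : Fe tb = 1) by (rewrite <- HFF; [auto|lra]).
  assert (HFmono : forall x y, x <= y -> Fe x <= Fe y).
  { intros x y Hxy. assert (0 <= RInt fe x y).
    { apply RInt_ge_0; auto. apply ex_all; auto. intros; left; apply Hfe_pos. }
    rewrite HFint2 in H. lra. }
  assert (HF01 : forall x, 0 <= x <= tb -> 0 <= Fe x <= 1).
  { intros x Hx. pose proof (HFmono 0 x (proj1 Hx)). pose proof (HFmono x tb (proj2 Hx)). lra. }
  set (E := mean_theta tb f).
  assert (Hcxfe : forall x, continuous (fun t => t * fe t) x).
  { intros; apply contR_mult; [apply contR_id|auto]. }
  assert (HE : E = RInt (fun x => x * fe x) 0 tb).
  { unfold E, mean_theta. apply RInt_ext_in with tb; [lra|lra|]. intros t Ht. rewrite Hfe_eq; auto. }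
  assert (KEY1 : RInt Fe 0 tb + E = tb).
  { rewrite HE. rewrite <- RInt_plusR by (apply ex_all; auto).
    rewrite (ftc (fun x => x * Fe x) (fun x => Fe x + x * fe x) 0 tb).
    - rewrite HFe1. toR; ring.
    - intros x. pose proof (is_derive_multR (fun t => t) Fe x 1 (fe x) (is_derive_id x) (HFe_d x)) as H.
      simpl in H. replace (Fe x + x * fe x) with (1 * Fe x + x * fe x) by ring. exact H.
    - intros x. apply contR_plus; auto. }
  assert (Hc1Fe : forall x, continuous (fun t => 1 - Fe t) x).
  { intros; apply contR_minus; [apply contR_const|auto]. }
  assert (KEY1b : RInt (fun x => 1 - Fe x) 0 tb = E).
  { rewrite (RInt_minusR (fun _ => 1) Fe) by (apply ex_all; auto; intros; apply contR_const).
    rewrite RInt_const. unfold scal; simpl; unfold mult; simpl. lra. }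
  set (g0 := fun x => 1 - Fe x - E * fe x).
  assert (Hg0c : forall x, continuous g0 x).
  { intros; unfold g0. apply contR_minus; auto. apply contR_mult; [apply contR_const|auto]. }
  assert (Hg0int : forall a b, RInt g0 a b = RInt (fun x => 1 - Fe x) a b - E * (Fe b - Fe a)).
  { intros a b. unfold g0. rewrite (RInt_minusR (fun x => 1 - Fe x) (fun x => E * fe x)).
    - rewrite RInt_scalR by (apply ex_all; auto). rewrite HFint2. toR; ring.
    - apply ex_all; auto.
    - apply ex_all; intros; apply contR_mult; [apply contR_const|auto]. }
  assert (KEY2 : RInt g0 0 tb = 0).
  { rewrite Hg0int, KEY1b, HFe1, HFe0. toR; ring. }
  assert (HPsi : forall th, 0 <= th <= tb ->
     RInt (fun x => ((1 - F x) / f x - E) * f x) 0 th = RInt g0 0 th).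
  { intros th Hth. apply RInt_ext_in with tb; [lra|auto|]. intros t Ht.
    unfold g0. rewrite HFF by auto. rewrite <- (Hfe_eq t Ht).
    pose proof (Hfe_pos t). toR; field. lra. }
  assert (HFf : forall x y, 0 <= x <= tb -> 0 <= y <= tb ->
     RInt (fun t => F t * f t) x y = (Fe y * Fe y - Fe x * Fe x) / 2).
  { intros x y Hx Hy. rewrite (RInt_ext_in tb _ (fun t => Fe t * fe t) x y Hx Hy).
    2:{ intros t Ht. rewrite HFF, Hfe_eq by auto. reflexivity. }
    rewrite (ftc (fun t => / 2 * (Fe t * Fe t))).
    - toR; field.
    - intros z. pose proof (is_derive_scal _ z (/ 2) _ (is_derive_multR Fe Fe z _ _ (HFe_d z) (HFe_d z))) as H.
      replace (Fe z * fe z) with (/ 2 * (fe z * Fe z + Fe z * fe z)) by field. exact H.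
    - intros z. apply contR_mult; auto. }
  assert (HcFex : forall c x y, 0 <= x <= tb -> 0 <= y <= tb -> ex_RInt (fun t => c * f t) x y).
  { intros c x y Hx Hy. apply ex_RInt_ext_in with tb (fun t => c * fe t); auto.
    - intros t Ht. rewrite Hfe_eq; auto.
    - apply ex_RInt_scalR. apply ex_all; auto. }
  assert (HcF : forall c x y, 0 <= x <= tb -> 0 <= y <= tb ->
     RInt (fun t => c * f t) x y = c * (Fe y - Fe x)).
  { intros c x y Hx Hy. rewrite (RInt_ext_in tb _ (fun t => c * fe t) x y Hx Hy).
    2:{ intros t Ht. rewrite Hfe_eq; auto. }
    rewrite RInt_scalR by (apply ex_all; auto). rewrite HFint2. reflexivity. }
  assert (HW : forall s, W0 tb F f s = RInt (fun t => (1 - Fe t) * s t) 0 tb).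
  { intros s. unfold W0. apply RInt_ext_in with tb; [lra|lra|]. intros t Ht.
    rewrite HFF by auto. pose proof (Hpos t Ht). toR; field. lra. }
  assert (HWhalf : W0 tb F f (fun _ => 1 / 2) = E / 2).
  { rewrite HW. rewrite (RInt_ext _ (fun t => 1 / 2 * (1 - Fe t))).
    2:{ intros; toR; ring. }
    rewrite RInt_scalR by (apply ex_all; auto). rewrite KEY1b. toR; field. }
  assert (HS0half : S0 tb F f (fun _ => 1 / 2)).
  { split; [intros; lra|split; [intros; lra|split]].
    - intros x Hx. rewrite HcF, HFf by lra. rewrite HFe1.
      pose proof (HF01 x Hx). nra.
    - rewrite HcF, HFf by lra. rewrite HFe1, HFe0. toR; field. }
  split.
  -
    intros [_ Hmax] th Hth. rewrite HPsi by auto.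
    set (p := Fe th). assert (Hp : 0 <= p <= 1) by (apply HF01; auto).
    set (s' := fun t => if Rlt_dec th t then (1 + p) / 2 else p / 2).
    assert (Hs'f : forall x, 0 <= x <= tb -> RInt (fun t => s' t * f t) x tb =
      if Rle_dec th x then (1 + p) / 2 * (1 - Fe x) else p / 2 * (p - Fe x) + (1 + p) / 2 * (1 - p)).
    { intros x Hx. destruct (Rle_dec th x) as [Hle|Hlt].
      - rewrite (RInt_ext _ (fun t => (1 + p) / 2 * f t)).
        + rewrite HcF by lra. rewrite HFe1. reflexivity.
        + intros t Ht. rewrite Rmin_left, Rmax_right in Ht by lra. unfold s'.
          destruct Rlt_dec; [reflexivity|lra].
      - assert (E1 : ex_RInt (fun t => s' t * f t) x th).
        { apply (ex_RInt_ext (V:=R_NormedModule)) with (fun t => p / 2 * f t); [|apply HcFex; lra].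
          intros t Ht. rewrite Rmin_left, Rmax_right in Ht by lra. unfold s'.
          destruct Rlt_dec; [lra|reflexivity]. }
        assert (E2 : ex_RInt (fun t => s' t * f t) th tb).
        { apply (ex_RInt_ext (V:=R_NormedModule)) with (fun t => (1 + p) / 2 * f t); [|apply HcFex; lra].
          intros t Ht. rewrite Rmin_left, Rmax_right in Ht by lra. unfold s'.
          destruct Rlt_dec; [reflexivity|lra]. }
        rewrite <- (RInt_ChaslesR _ x th tb E1 E2).
        rewrite (RInt_ext _ (fun t => p / 2 * f t) x th).
        2:{ intros t Ht. rewrite Rmin_left, Rmax_right in Ht by lra. unfold s'.
          destruct Rlt_dec; [lra|reflexivity]. }
        rewrite (RInt_ext _ (fun t => (1 + p) / 2 * f t) th tb).
        2:{ intros t Ht. rewrite Rmin_left, Rmax_right in Ht by lra. unfold s'.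
          destruct Rlt_dec; [reflexivity|lra]. }
        rewrite !HcF by lra. rewrite HFe1. fold p. toR; ring. }
    assert (HS0' : S0 tb F f s').
    { split; [|split; [|split]].
      - intros x y Hx Hxy Hy. unfold s'. destruct (Rlt_dec th x); destruct (Rlt_dec th y); lra.
      - intros x Hx. unfold s'. destruct Rlt_dec; lra.
      - intros x Hx. rewrite Hs'f by auto. rewrite HFf by lra. rewrite HFe1.
        pose proof (HF01 x Hx). destruct Rle_dec as [Hle|Hlt].
        + assert (p <= Fe x) by (apply HFmono; auto). nra.
        + assert (Fe x <= p) by (apply HFmono; lra). nra.
      - rewrite Hs'f by lra. rewrite HFf by lra. rewrite HFe1, HFe0. destruct Rle_dec.
        + assert (Hp0 : p = 0) by (unfold p; replace th with 0 by lra; auto).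
          rewrite Hp0. toR; field.
        + toR; field. }
    set (A := RInt (fun t => 1 - Fe t) 0 th).
    set (B := RInt (fun t => 1 - Fe t) th tb).
    assert (HWs : RInt (fun t => (1 - Fe t) * s' t) 0 tb = p / 2 * A + (1 + p) / 2 * B).
    { assert (E1 : ex_RInt (fun t => (1 - Fe t) * s' t) 0 th).
      { apply (ex_RInt_ext (V:=R_NormedModule)) with (fun t => p / 2 * (1 - Fe t)).
        2:{ apply ex_RInt_scalR; apply ex_all; auto. }
        intros t Ht. rewrite Rmin_left, Rmax_right in Ht by lra. unfold s'.
        destruct Rlt_dec; [lra|toR; ring]. }
      assert (E2 : ex_RInt (fun t => (1 - Fe t) * s' t) th tb).
      { apply (ex_RInt_ext (V:=R_NormedModule)) with (fun t => (1 + p) / 2 * (1 - Fe t)).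
        2:{ apply ex_RInt_scalR; apply ex_all; auto. }
        intros t Ht. rewrite Rmin_left, Rmax_right in Ht by lra. unfold s'.
        destruct Rlt_dec; [toR; ring|lra]. }
      rewrite <- (RInt_ChaslesR _ 0 th tb E1 E2).
      rewrite (RInt_ext _ (fun t => p / 2 * (1 - Fe t)) 0 th).
      2:{ intros t Ht. rewrite Rmin_left, Rmax_right in Ht by lra. unfold s'.
          destruct Rlt_dec; [lra|toR; ring]. }
      rewrite (RInt_ext _ (fun t => (1 + p) / 2 * (1 - Fe t)) th tb).
      2:{ intros t Ht. rewrite Rmin_left, Rmax_right in Ht by lra. unfold s'.
          destruct Rlt_dec; [toR; ring|lra]. }
      rewrite !RInt_scalR by (apply ex_all; auto). reflexivity. }
    assert (HAB : A + B = E).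
    { unfold A, B. rewrite RInt_ChaslesR by (apply ex_all; auto). exact KEY1b. }
    pose proof (Hmax s' HS0') as Hm. rewrite HW, HWs, HWhalf in Hm.
    rewrite Hg0int, HFe0. fold A. fold p. rewrite <- HAB in Hm |- *. nra.
  -
    intros HC. split; [exact HS0half|]. intros s' Hs'.
    destruct Hs' as [Hmono [H01 [_ Heq]]].
    rewrite HW, HWhalf.
    assert (Hm : Mono_on s' 0 tb) by exact Hmono.
    assert (Hfec : Cont_on fe 0 tb) by (apply cont_on_all; auto).
    assert (Hg0c' : Cont_on g0 0 tb) by (apply cont_on_all; auto).
    rewrite (RInt_ext (fun t => (1 - Fe t) * s' t) (fun t => s' t * g0 t + E * (s' t * fe t))).
    2:{ intros; unfold g0; toR; ring. }
    rewrite RInt_plusR.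
    2:{ apply mono_int; auto; lra. }
    2:{ apply ex_RInt_scalR. apply mono_int; auto; lra. }
    rewrite RInt_scalR by (apply mono_int; auto; lra).
    assert (Hsfe : RInt (fun t => s' t * fe t) 0 tb = 1 / 2).
    { rewrite (RInt_ext_in tb _ (fun t => s' t * f t)) by (try lra; intros; rewrite Hfe_eq; auto).
      rewrite Heq, HFf by lra. rewrite HFe1, HFe0. toR; field. }
    rewrite Hsfe.
    assert (RInt (fun t => s' t * g0 t) 0 tb <= 0).
    { apply bonnet; [lra|auto|auto|auto|]. intros m Hm0.
      pose proof (RInt_ChaslesR g0 0 m tb (ex_all g0 0 m Hg0c) (ex_all g0 m tb Hg0c)).
      pose proof (HC m Hm0). rewrite HPsi in H0 by auto. lra. }
    lra.
Qed.
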